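(* Let $N\ge3$, let $f_1,\dots,f_N$ be coordinates with Poisson brackets $\{f_m,f_n\}=-\delta_{m+1,n}+\delta_{m-1,n}$ (indices mod $N$), and let $\beta_1,\dots,\beta_{N-2}$ be constants. For $m=1,\dots,N-2$ let $F_m(\lambda)=\prod_{n=m}^{N-2}\bigl(1+(\lambda+\beta_n)\frac{\partial^2}{\partial f_n\partial f_{n+1}}\bigr)(f_m\cdots f_{N-1})$ and $F_{N-1}(\lambda)=f_{N-1}$. Then for each $n=0,1,\dots,N-3$ and independent parameters $\lambda,\mu$, $$\{F_{n+1}(\lambda),F_{n+1}(\mu)\}=\{F_{n+2}(\lambda),F_{n+2}(\mu)\}=0,\qquad \{F_{n+1}(\lambda),F_{n+2}(\mu)\}=\frac{F_{n+2}(\lambda)F_{n+1}(\mu)-F_{n+1}(\lambda)F_{n+2}(\mu)}{\lambda-\mu}.$$ In particular $B(\lambda)=F_1(\lambda)$ and $\tilde A(\lambda)=F_2(\lambda)$ satisfy $\{\tilde A(\lambda),\tilde A(\mu)\}=\{B(\lambda),B(\mu)\}=0$ and $\{\tilde A(\lambda),B(\mu)\}=\frac{B(\lambda)\tilde A(\mu)-\tilde A(\lambda)B(\mu)}{\lambda-\mu}$.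
   Context: Brackets of polynomials in $\lambda$ are computed coefficientwise. When $N$ is even the $f_n$ may additionally be constrained by $f_1+f_3+\cdots+f_{N-1}=f_2+f_4+\cdots+f_N$; the function $v=(f_1+\cdots+f_N)/2$ is a Casimir of this bracket. *)

(* Defs.v *)
From HB Require Import structures.
From mathcomp Require Import all_boot all_order all_algebra.
From mathcomp Require Import mpoly.
Set Implicit Arguments. Unset Strict Implicit. Unset Printing Implicit Defensive.
Import GRing.Theory.
Local Open Scope ring_scope.

(* Polynomial ring in N+2 variables over R:
   variable 'X_(k-1) (k = 1..N) is the coordinate f_k,
   variable 'X_N is the parameter lambda, 'X_(N+1) is the parameter mu. *)

Definition lamv (N : nat) : 'I_N.+2 := inord N.
Definition muv (N : nat) : 'I_N.+2 := inord N.+1.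
Arguments lamv N : clear implicits.
Arguments muv N : clear implicits.

Section Defs.
Variable R : fieldType.
Variable N : nat.

Definition fv (k : nat) : {mpoly R[N.+2]} := 'X_(inord k.-1).
Definition dv (k : nat) (p : {mpoly R[N.+2]}) : {mpoly R[N.+2]} :=
  mderiv (inord k.-1) p.


Definition pbc (m k : nat) : R :=
  (((m %% N == k.+1 %% N)%N)%:R - ((k %% N == m.+1 %% N)%N)%:R).

(* Poisson bracket of polynomials (coefficientwise in lambda, mu) *)
Definition pbr (P Q : {mpoly R[N.+2]}) : {mpoly R[N.+2]} :=
  \sum_(1 <= m < N.+1) \sum_(1 <= k < N.+1)
     (pbc m k)%:MP * (dv m P * dv k Q).

Definition Dop (beta : nat -> R) (l : 'I_N.+2) (k : nat) (p : {mpoly R[N.+2]})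
  : {mpoly R[N.+2]} :=
  p + ('X_l + (beta k)%:MP) * dv k (dv k.+1 p).

Definition F (beta : nat -> R) (m : nat) (l : 'I_N.+2) : {mpoly R[N.+2]} :=
  if m == N.-1 then fv N.-1
  else foldr (Dop beta l) (\prod_(m <= k < N) fv k) (iota m (N.-1 - m)).

End Defs.

(* Main.v *)
Require Import Defs.
From HB Require Import structures.
From mathcomp Require Import all_boot all_order all_algebra.
From mathcomp Require Import mpoly.
From mathcomp Require Import ring zify.
Set Implicit Arguments. Unset Strict Implicit. Unset Printing Implicit Defensive.
Import GRing.Theory.
Local Open Scope ring_scope.


Section S.
Variable R : fieldType.
Variable N : nat.
Hypothesis hN : (3 <= N)%N.
Local Notation P := {mpoly R[N.+2]}.

Lemma mderivXU (i j : 'I_N.+2) : mderiv i ('X_j : P) = (i == j)%:R.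
Proof.
rewrite mderivX mnm1E; case: eqP => [->|ne].
  have ->: (U_(i) - U_(i) = 0)%MM by apply/mnmP => k; rewrite mnmBE mnm0E subnn.
  by rewrite eqxx mpolyX0 scale1r.
by rewrite eq_sym; case: eqP => // _; rewrite scale0r.
Qed.

Lemma inord_eqE (a b : nat) : (a < N.+2)%N -> (b < N.+2)%N ->
  (inord a == inord b :> 'I_N.+2) = (a == b).
Proof.
move=> ha hb; apply/eqP/eqP => [/(congr1 val)|->//].
by rewrite /= !inordK.
Qed.

Lemma dv_fv k j : (1 <= k <= N)%N -> (1 <= j <= N)%N ->
  dv k (fv R N j) = (k == j)%:R.
Proof.
move=> hk hj; rewrite /dv /fv mderivXU inord_eqE; try lia.
congr (_%:R); apply/eqP/eqP; lia.
Qed.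

Lemma dv_Xl k (l : 'I_N.+2) : (N <= l)%N -> (1 <= k <= N)%N -> dv k ('X_l : P) = 0.
Proof.
move=> hl hk; rewrite /dv mderivXU.
case: eqP => // /(congr1 val) /=; rewrite inordK; lia.
Qed.

Lemma dv_C k (a : R) : dv k (a%:MP : P) = 0.
Proof. exact: mderivC. Qed.

Lemma dvD k (p q : P) : dv k (p + q) = dv k p + dv k q.
Proof. exact: mderivD. Qed.
Lemma dvM k (p q : P) : dv k (p * q) = dv k p * q + p * dv k q.
Proof. exact: mderivM. Qed.
Lemma dv1 k : dv k (1 : P) = 0.
Proof. by rewrite -mpolyC1 dv_C. Qed.


Local Notation pb := (@pbr R N).

Lemma pbrDl (p q r : P) : pb (p + q) r = pb p r + pb q r.
Proof.
rewrite /pbr -big_split; apply: eq_bigr => m _; rewrite -big_split.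
by apply: eq_bigr => k _; rewrite dvD /=; ring.
Qed.

Lemma pbrDr (p q r : P) : pb r (p + q) = pb r p + pb r q.
Proof.
rewrite /pbr -big_split; apply: eq_bigr => m _; rewrite -big_split.
by apply: eq_bigr => k _; rewrite dvD /=; ring.
Qed.

Lemma pbrMl (p q r : P) : pb (p * q) r = q * pb p r + p * pb q r.
Proof.
rewrite /pbr !mulr_sumr -big_split; apply: eq_bigr => m _.
rewrite !mulr_sumr -big_split; apply: eq_bigr => k _; rewrite dvM /=; ring.
Qed.

Lemma pbrMr (p q r : P) : pb r (p * q) = q * pb r p + p * pb r q.
Proof.
rewrite /pbr !mulr_sumr -big_split; apply: eq_bigr => m _.
rewrite !mulr_sumr -big_split; apply: eq_bigr => k _; rewrite dvM /=; ring.
Qed.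

Lemma pbc_anti m k : pbc R N k m = - pbc R N m k.
Proof. by rewrite /pbc opprB. Qed.

Lemma pbr_anti (p q : P) : pb p q = - pb q p.
Proof.
rewrite /pbr exchange_big -sumrN; apply: eq_bigr => m _.
rewrite -sumrN; apply: eq_bigr => k _; rewrite pbc_anti rmorphN /=; ring.
Qed.

Definition isconst (c : P) := forall k, (1 <= k <= N)%N -> dv k c = 0.

Lemma pbr_constl c (q : P) : isconst c -> pb c q = 0.
Proof.
move=> hc; rewrite /pbr big_nat big1 // => m hm; rewrite big1 // => k _.
by rewrite hc ?mul0r ?mulr0 //; lia.
Qed.

Lemma pbr_constr c (q : P) : isconst c -> pb q c = 0.
Proof. by move=> hc; rewrite pbr_anti pbr_constl ?oppr0. Qed.

Lemma isconst1 : isconst 1.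
Proof. by move=> k _; rewrite dv1. Qed.

Lemma isconst_c (l : 'I_N.+2) a : (N <= l)%N -> isconst ('X_l + a%:MP).
Proof. by move=> hl k hk; rewrite dvD dv_C dv_Xl // addr0. Qed.

Lemma pbr_fv_self j : (1 <= j <= N)%N -> pb (fv R N j) (fv R N j) = 0.
Proof.
move=> hj; rewrite /pbr big_nat big1 // => m hm; rewrite big_nat big1 // => k hk.
rewrite !dv_fv //; try lia.
case: (eqVneq m j) => [->|]; last by move=> _; rewrite mul0r mulr0.
case: (eqVneq k j) => [->|]; last by move=> _; rewrite mulr0 mulr0.
by rewrite /pbc subrr mul0r.
Qed.


Lemma pbc_far m k : (1 <= m)%N -> (m.+2 <= k)%N -> (k < N)%N -> pbc R N m k = 0.
Proof.
move=> h1 h2 h3; rewrite /pbc (modn_small (m:=m)); last by lia.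
rewrite (modn_small (m:=k)) // (modn_small (m:=m.+1)); last by lia.
have ->: (k == m.+1) = false by apply/negbTE/eqP; lia.
case: (ltnP k.+1 N) => hk.
  by rewrite modn_small // (_ : (m == k.+1) = false) ?subrr //; apply/negbTE/eqP; lia.
have ->: k.+1 = N by lia.
by rewrite modnn (_ : (m == 0) = false) ?subrr //; apply/negbTE/eqP; lia.
Qed.

Lemma pbc_next m : (1 <= m)%N -> (m.+2 <= N)%N -> pbc R N m m.+1 = -1.
Proof.
move=> h1 h2; rewrite /pbc eqxx.
suff ->: ((m %% N)%N == (m.+2 %% N)%N) = false by rewrite sub0r.
case: (ltnP m.+2 N) => hk.
  rewrite (modn_small (m:=m)); last by lia.
  rewrite (modn_small (m:=m.+2)) //.
  by apply/negbTE/eqP; lia.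
have ->: m.+2 = N by lia.
by rewrite modnn modn_small //; try lia; apply/negbTE/eqP; lia.
Qed.

Lemma pbr_fv m (q : P) : (1 <= m)%N -> (m.+2 <= N)%N ->
  (forall k, (1 <= k < m)%N -> dv k q = 0) -> dv N q = 0 ->
  pb (fv R N m) q = - dv m.+1 q.
Proof.
move=> h1 h2 hq hN'; rewrite /pbr.
have ->: \sum_(1 <= m' < N.+1) \sum_(1 <= k < N.+1)
    (pbc R N m' k)%:MP * (dv m' (fv R N m) * dv k q) =
    \sum_(1 <= k < N.+1) (pbc R N m k)%:MP * dv k q.
  rewrite exchange_big; apply: eq_bigr => k _.
  rewrite (bigD1_seq m) /= ?mem_index_iota ?iota_uniq //; last by lia.
  rewrite big1_seq ?addr0; last first.
    move=> m' /andP[ne]; rewrite mem_index_iota => hm'.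
    rewrite dv_fv; try lia.
    by rewrite (negbTE ne) mul0r mulr0.
  by rewrite dv_fv ?eqxx ?mul1r //; lia.
rewrite (bigD1_seq m.+1) /= ?mem_index_iota ?iota_uniq //; last by lia.
rewrite big1_seq ?addr0; last first.
  move=> k /andP[ne]; rewrite mem_index_iota => hk.
  case: (ltnP k m) => hkm; first by rewrite hq ?mulr0 //; lia.
  case: (eqVneq k m) => [->|nem]; first by rewrite /pbc subrr mul0r.
  case: (eqVneq k N) => [->|neN]; first by rewrite hN' !mulr0.
  by rewrite pbc_far ?mul0r //; lia.
by rewrite pbc_next // rmorphN rmorph1 mulN1r.
Qed.


Lemma down_ind (Pr : nat -> Prop) t : Pr t ->
  (forall m, (1 <= m < t)%N -> Pr m.+1 -> Pr m) ->
  forall m, (1 <= m <= t)%N -> Pr m.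
Proof.
move=> ht hs m hm; have [d hd]: exists d, (m + d = t)%N by exists (t - m)%N; lia.
elim: d m hm hd => [|d ih] m hm hd; first by move: hd; rewrite addn0 => ->.
apply: hs; first by lia.
by apply: ih; lia.
Qed.

Variable beta : nat -> R.
Variable l : 'I_N.+2.
Hypothesis hl : (N <= l)%N.

Local Notation c k := ('X_l + (beta k)%:MP : P).
Definition G m : P := foldr (Dop beta l) (\prod_(m <= k < N) fv R N k) (iota m (N.-1 - m)).

Lemma F_G m : F beta m l = G m.
Proof.
rewrite /F /G; case: eqP => // ->.
rewrite subnn /= big_ltn; last by lia.
by rewrite big_geq ?mulr1 //; lia.
Qed.

Lemma foldr_comm m p a n : (1 <= m)%N -> (m < a)%N -> (a + n <= N)%N ->
  foldr (Dop beta l) (fv R N m * p) (iota a n) = fv R N m * foldr (Dop beta l) p (iota a n).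
Proof.
move=> h1 h2; elim: n a h2 => [|n ih] a h2 h3 //=.
rewrite ih; try lia.
rewrite /Dop; set q := foldr _ p _.
rewrite dvM (dv_fv (k:=a.+1)); try lia.
rewrite (_ : (a.+1 == m) = false); last by apply/negbTE/eqP; lia.
rewrite mul0r add0r dvM (dv_fv (k:=a)); try lia.
rewrite (_ : (a == m) = false); last by apply/negbTE/eqP; lia.
by rewrite mul0r add0r; ring.
Qed.

Lemma G_rec m : (1 <= m)%N -> (m.+2 <= N)%N -> G m = Dop beta l m (fv R N m * G m.+1).
Proof.
move=> h1 h2; rewrite /G.
have ->: (N.-1 - m = (N.-1 - m.+1).+1)%N by lia.
rewrite /= (big_ltn (m:=m)); last by lia.
by rewrite foldr_comm //; lia.
Qed.


Definition Qa m := forall k, (1 <= k <= N)%N -> ((k < m)%N || (k == N)) -> dv k (G m) = 0.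
Definition Qb m := dv m (G m) = G m.+1.

Lemma G_N : G N = 1.
Proof. by rewrite /G (_ : (N.-1 - N = 0)%N) /= ?big_geq //; lia. Qed.

Lemma G_N1 : G N.-1 = fv R N N.-1.
Proof. by rewrite -F_G /F eqxx. Qed.

Lemma dv_cM k j (x : P) : (1 <= k <= N)%N -> dv k (c j * x) = c j * dv k x.
Proof. by move=> hk; rewrite dvM isconst_c // mul0r add0r. Qed.

Lemma G_rec2 m : (1 <= m)%N -> (m.+2 <= N)%N -> Qb m.+1 -> Qa m.+2 ->
  G m = fv R N m * G m.+1 + c m * G m.+2.
Proof.
move=> h1 h2 hb ha; rewrite G_rec // /Dop; congr (_ + _ * _).
rewrite dvM (dv_fv (k:=m.+1)); try lia.
rewrite (_ : (m.+1 == m) = false); last by apply/negbTE/eqP; lia.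
rewrite mul0r add0r hb dvM dv_fv ?eqxx ?mul1r; try lia.
by rewrite ha ?mulr0 ?addr0 //; try lia; rewrite leqnn.
Qed.

Lemma Q_step m : (1 <= m)%N -> (m.+2 <= N)%N -> Qa m.+1 -> Qa m.+2 -> Qb m.+1 ->
  Qa m /\ Qb m.
Proof.
move=> h1 h2 ha1 ha2 hb; rewrite /Qa /Qb G_rec2 //; split.
  move=> k hk hkm; rewrite dvD dvM dv_cM // dv_fv //; try lia.
  rewrite (_ : (k == m) = false); last by apply/negbTE/eqP; move: hkm => /orP[]; lia.
  rewrite ha1 ?ha2 ?mul0r ?mulr0 ?addr0 //; move: hkm => /orP[]; lia.
rewrite dvD dvM dv_cM // ?dv_fv ?eqxx ?mul1r; try lia.
by rewrite ha1 ?ha2 ?mulr0 ?addr0 //; try lia; rewrite ?ltnSn ?leqnn ?ltnW.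
Qed.

Lemma Q_all m : (1 <= m <= N.-1)%N -> [/\ Qa m, Qa m.+1 & Qb m].
Proof.
apply: (down_ind (Pr := fun m => [/\ Qa m, Qa m.+1 & Qb m])).
  have hN1 : N.-1.+1 = N by lia.
  split; rewrite /Qa /Qb ?hN1 ?G_N ?G_N1.
  - move=> k hk hkm; rewrite dv_fv //; try lia.
    rewrite (_ : (k == N.-1) = false) //; apply/negbTE/eqP; move: hkm => /orP[]; lia.
  - by move=> k _ _; rewrite dv1.
  - by rewrite dv_fv ?eqxx //; lia.
move=> m0 hm [ha1 ha2 hb].
have [] := Q_step (m:=m0) _ _ ha1 ha2 hb; try lia.
by move=> ha hb'; split.
Qed.

End S.
Section T.
Variable R : fieldType.
Variable N : nat.
Hypothesis hN : (3 <= N)%N.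
Local Notation P := {mpoly R[N.+2]}.
Local Notation pb := (@pbr R N).

Lemma step_alg (fm A1 A2 B1 B2 c1 c2 x1 x2 : P) :
 isconst c1 -> isconst c2 -> c1 = c2 + x1 - x2 ->
 pb fm fm = 0 -> pb fm A1 = -B1 -> pb fm A2 = -B2 -> pb fm B1 = 0 -> pb fm B2 = 0 ->
 pb A1 A2 = 0 -> pb B1 B2 = 0 ->
 (x1 - x2) * pb A1 B2 = B1 * A2 - A1 * B2 ->
 (x2 - x1) * pb A2 B1 = B2 * A1 - A2 * B1 ->
 x1 - x2 != 0 ->
 pb (fm * A1 + c1 * B1) (fm * A2 + c2 * B2) = 0 /\
 (x1 - x2) * pb (fm * A1 + c1 * B1) A2 = A1 * (fm * A2 + c2 * B2) - (fm * A1 + c1 * B1) * A2.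
Proof.
move=> k1 k2 hc ff fA1 fA2 fB1 fB2 AA BB hY hZ hx.
have A1f : pb A1 fm = B1 by rewrite pbr_anti fA1 opprK.
have A2f : pb A2 fm = B2 by rewrite pbr_anti fA2 opprK.
have B1f : pb B1 fm = 0 by rewrite pbr_anti fB1 oppr0.
have B1A2 : pb B1 A2 = - pb A2 B1 by rewrite pbr_anti.
split.
  apply/(mulfI hx); rewrite mulr0.
  rewrite !pbrDl !pbrDr !pbrMl !pbrMr !(pbr_constl _ k1) !(pbr_constr _ k2).
  rewrite ?ff ?fA1 ?fA2 ?fB1 ?fB2 ?AA ?BB ?A1f ?A2f ?B1f ?B1A2 hc.
  transitivity (c2 * fm * ((x1 - x2) * pb A1 B2 - (B1 * A2 - A1 * B2))
     + (c2 + x1 - x2) * fm * ((x2 - x1) * pb A2 B1 - (B2 * A1 - A2 * B1))); first ring.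
  by rewrite hY hZ !subrr !mulr0 addr0.
rewrite !pbrDl !pbrMl (pbr_constl _ k1) fA2 AA B1A2.
transitivity (- (x1 - x2) * A1 * B2 + c1 * ((x2 - x1) * pb A2 B1)); first ring.
by rewrite hZ hc; ring.
Qed.


Lemma X_neq (l1 l2 : 'I_N.+2) : l1 != l2 -> ('X_l1 - 'X_l2 : P) != 0.
Proof.
move=> ne; apply/eqP => h; have := congr1 (mcoeff U_(l1)) h.
rewrite mcoeffB !mcoeffXU eqxx eq_sym (negbTE ne) subr0 mcoeff0 => /eqP.
by rewrite oner_eq0.
Qed.

Variable beta : nat -> R.
Local Notation GG l m := (G beta l m).

Definition Sm m := forall l1 l2 : 'I_N.+2, (N <= l1)%N -> (N <= l2)%N -> l1 != l2 ->
  [/\ pb (GG l1 m) (GG l2 m) = 0, pb (GG l1 m.+1) (GG l2 m.+1) = 0 &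
      ('X_l1 - 'X_l2) * pb (GG l1 m) (GG l2 m.+1)
        = GG l1 m.+1 * GG l2 m - GG l1 m * GG l2 m.+1].

Lemma S_all m : (1 <= m <= N.-1)%N -> Sm m.
Proof.
apply: (@down_ind N hN).
  move=> l1 l2 h1 h2 ne.
  have hN1 : N.-1.+1 = N by lia.
  rewrite hN1 (G_N hN beta h1) (G_N hN beta h2) (G_N1 hN beta h1) (G_N1 hN beta h2); split.
  - by apply: pbr_fv_self => //; lia.
  - by rewrite pbr_constl //; apply: isconst1.
  - rewrite pbr_constr; last by apply: isconst1.
    ring.
move=> m0 hm IH l1 l2 h1 h2 ne.
have [IH1 IH2 IH3] := IH l1 l2 h1 h2 ne.
have ne' : l2 != l1 by rewrite eq_sym.
have [_ _ IH4] := IH l2 l1 h2 h1 ne'.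
have hm1 : (1 <= m0.+1 <= N.-1)%N by lia.
have hm0 : (1 <= m0)%N by lia.
have hm2 : (m0.+2 <= N)%N by lia.
have [qa1 qa1' qb1] := Q_all hN beta h1 hm1.
have [qa2 qa2' qb2] := Q_all hN beta h2 hm1.
have fA (l : 'I_N.+2) : (N <= l)%N -> Qa beta l m0.+1 -> Qb beta l m0.+1 ->
    pb (fv R N m0) (GG l m0.+1) = - GG l m0.+2.
  move=> hl qa qb; rewrite (pbr_fv hN) //; first by rewrite qb.
    by move=> k hk; apply: qa; [lia | apply/orP; left; lia].
  by apply: qa; [lia | rewrite eqxx orbT].
have fB (l : 'I_N.+2) : (N <= l)%N -> Qa beta l m0.+2 ->
    pb (fv R N m0) (GG l m0.+2) = 0.
  move=> hl qa; rewrite (pbr_fv hN) //.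
  - by rewrite qa ?oppr0 //; [lia | apply/orP; left; lia].
  - by move=> k hk; apply: qa; [lia | apply/orP; left; lia].
  - by apply: qa; [lia | rewrite eqxx orbT].
rewrite (G_rec2 hN h1 hm0 hm2 qb1 qa1') (G_rec2 hN h2 hm0 hm2 qb2 qa2').
have hc : 'X_l1 + (beta m0)%:MP = 'X_l2 + (beta m0)%:MP + 'X_l1 - 'X_l2 :> P by ring.
have hmm : (1 <= m0 <= N)%N by lia.
have [s1 s2] := step_alg (fm := fv R N m0) (isconst_c hN (beta m0) h1) (isconst_c hN (beta m0) h2)
  hc (pbr_fv_self R hN hmm)
  (fA _ h1 qa1 qb1) (fA _ h2 qa2 qb2) (fB _ h1 qa1') (fB _ h2 qa2') IH1 IH2 IH3 IH4 (X_neq ne).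
by split.
Qed.


End T.

Theorem mainTheorem8 (R : fieldType) (N : nat) (beta : nat -> R) :
  (3 <= N)%N ->
  forall n : nat, (n <= N - 3)%N ->
    [/\ pbr (F beta n.+1 (lamv N)) (F beta n.+1 (muv N)) = 0,
        pbr (F beta n.+2 (lamv N)) (F beta n.+2 (muv N)) = 0
      & ('X_(lamv N) - 'X_(muv N)) *
          pbr (F beta n.+1 (lamv N)) (F beta n.+2 (muv N))
        = F beta n.+2 (lamv N) * F beta n.+1 (muv N)
          - F beta n.+1 (lamv N) * F beta n.+2 (muv N)].
Proof.
move=> hN n hn.
have hm : (1 <= n.+1 <= N.-1)%N by lia.
have hl1 : (N <= lamv N)%N by rewrite /lamv inordK.
have hl2 : (N <= muv N)%N by rewrite /muv inordK.
have ne : lamv N != muv N.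
  by apply/eqP => /(congr1 val); rewrite /lamv /muv /= !inordK //; lia.
have [a b c] := S_all hN beta hm hl1 hl2 ne.
by rewrite !(F_G hN beta hl1) !(F_G hN beta hl2); split.
Qed.
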